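(* The relaxed composition $\uplus$ is not compositional with respect to stable models: there is no binary operation $\bowtie'$ mapping pairs of sets of interpretations to sets of interpretations such that $AS(\mathcal P_1\uplus\mathcal P_2)=AS(\mathcal P_1)\bowtie' AS(\mathcal P_2)$ for all program modules $\mathcal P_1,\mathcal P_2$ for which $\mathcal P_1\uplus\mathcal P_2$ is defined. (For instance, $\mathcal P_1=\langle\{a.\},\emptyset,\{a,b\},\emptyset\rangle$, $\mathcal Q_1=\langle\{a.\ \ \bot\leftarrow a,b.\},\emptyset,\{a,b\},\emptyset\rangle$, $\mathcal P_2=\mathcal Q_2=\langle\{b.\},\emptyset,\{b\},\emptyset\rangle$ satisfy $AS(\mathcal P_1)=AS(\mathcal Q_1)$, $AS(\mathcal P_2)=AS(\mathcal Q_2)$ but $AS(\mathcal P_1\uplus\mathcal P_2)\neq AS(\mathcal Q_1\uplus\mathcal Q_2)$.)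
   Context: A program module is a tuple $\mathcal P=\langle R,I,O,H\rangle$ where $R$ is a finite set of ground rules (normal rules $a\leftarrow b_1,\dots,b_m,not~c_1,\dots,not~c_n$, integrity constraints $\bot\leftarrow b_1,\dots,b_m,not~c_1,\dots,not~c_n$, and choice rules understood via their standard translation into normal rules), $I,O,H$ are pairwise disjoint finite sets of atoms (input, output, hidden atoms), every atom occurring in $R$ belongs to $At(\mathcal P)=I\cup O\cup H$, and no rule of $R$ has its head in $I$. For $M\subseteq At(\mathcal P)$, the reduct $R^M$ is obtained from $R$ by deleting every rule having some $not~c$ in its body with $c\in M$, and deleting all negative literals from the remaining rules. $M$ is a stable model of $\mathcal P$ iff $M$ satisfies all integrity constraints of $R$ and $M$ is the least model of the positive program $R^M\cup\{a.\mid a\in M\cap I\}$ (ignoring constraints). $AS(\mathcal P)$ denotes the set of stable models. Given $\mathcal P_1=\langle R_1,I_1,O_1,H_1\rangle$ and $\mathcal P_2=\langle R_2,I_2,O_2,H_2\rangle$, the relaxed composition $\mathcal P_1\uplus\mathcal P_2$ is defined iff $H_1\cap At(\mathcal P_2)=\emptyset$ and $H_2\cap At(\mathcal P_1)=\emptyset$, and then $\mathcal P_1\uplus\mathcal P_2=\langle R_1\cup R_2,(I_1\cup I_2)\setminus(O_1\cup O_2),O_1\cup O_2,H_1\cup H_2\rangle$. *)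

(* Defs.v *)
From Stdlib Require Import List.
From mathcomp Require Import all_boot.
Set Implicit Arguments. Unset Strict Implicit. Unset Printing Implicit Defensive.

Definition atom := nat.

(* Ground rules: normal rules  h <- pos, not neg  and integrity constraints
   bot <- pos, not neg. (Choice rules are syntactic sugar.) *)
Inductive rule : Type :=
  | Normal (h : atom) (pos neg : seq atom)
  | Constraint (pos neg : seq atom).

Definition rule_atoms (r : rule) : seq atom :=
  match r with
  | Normal h pos neg => h :: pos ++ neg
  | Constraint pos neg => pos ++ neg
  end.

Record module : Type := Module {
  rules : seq rule;
  inputs : seq atom;
  outputs : seq atom;
  hidden : seq atom }.

Definition At (P : module) : seq atom := inputs P ++ outputs P ++ hidden P.

Definition disjoint_seq (A B : seq atom) : Prop := forall x, x \in A -> x \notin B.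

Definition module_wf (P : module) : Prop :=
  [/\ disjoint_seq (inputs P) (outputs P),
      disjoint_seq (inputs P) (hidden P),
      disjoint_seq (outputs P) (hidden P),
      (forall r, List.In r (rules P) -> forall x, x \in rule_atoms r -> x \in At P) &
      (forall h pos neg, List.In (Normal h pos neg) (rules P) -> h \notin inputs P)].

Definition interp := atom -> bool.
Definition interp_set := interp -> Prop.

(* The positive program R^M U {a. | a in M /\ I} is "closed" under S. *)
Definition reduct_closed (P : module) (M : interp) (S : atom -> Prop) : Prop :=
  (forall a, a \in inputs P -> M a -> S a) /\
  (forall h pos neg, List.In (Normal h pos neg) (rules P) ->
     (forall c, c \in neg -> ~~ M c) ->
     (forall b, b \in pos -> S b) -> S h).

Definition satisfies_constraints (P : module) (M : interp) : Prop :=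
  forall pos neg, List.In (Constraint pos neg) (rules P) ->
    ~ ((forall b, b \in pos -> M b) /\ (forall c, c \in neg -> ~~ M c)).

Definition least_model_of_reduct (P : module) (M : interp) : Prop :=
  reduct_closed P M (fun x => M x) /\
  (forall S : atom -> Prop, reduct_closed P M S -> forall x, M x -> S x).

Definition AS (P : module) : interp_set := fun M =>
  (forall x, M x -> x \in At P) /\
  satisfies_constraints P M /\ least_model_of_reduct P M.

Definition relaxed_composable (P1 P2 : module) : Prop :=
  disjoint_seq (hidden P1) (At P2) /\ disjoint_seq (hidden P2) (At P1).

Definition relaxed_comp (P1 P2 : module) : module :=
  Module (rules P1 ++ rules P2)
    [seq x <- inputs P1 ++ inputs P2 | x \notin outputs P1 ++ outputs P2]
    (outputs P1 ++ outputs P2)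
    (hidden P1 ++ hidden P2).

(* Main.v *)
Require Import Defs.
From mathcomp Require Import all_boot.
From Stdlib Require Import FunctionalExtensionality PropExtensionality.

Definition P1 := Module [:: Normal 0 [::] [::]] [::] [:: 0; 1] [::].
Definition Q1 := Module [:: Normal 0 [::] [::]; Constraint [:: 0; 1] [::]] [::] [:: 0; 1] [::].
Definition P2 := Module [:: Normal 1 [::] [::]] [::] [:: 1] [::].

Lemma wfP1 : module_wf P1.
Proof.
split; try (by move=> x); simpl.
- move=> r [<-|[]] x; by rewrite /= !inE /At /= => /eqP->.
Qed.

Lemma wfQ1 : module_wf Q1.
Proof.
split; try (by move=> x); simpl.
- move=> r [<-|[<-|[]]] x; rewrite /= !inE /At /=.
  + by move=> /eqP->.
  + by move=> /orP[]/eqP->.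
Qed.

Lemma wfP2 : module_wf P2.
Proof.
split; try (by move=> x); simpl.
- move=> r [<-|[]] x; rewrite /= !inE /At /=; by move=> /eqP->.
Qed.

Lemma compP : relaxed_composable P1 P2.
Proof. by split. Qed.
Lemma compQ : relaxed_composable Q1 P2.
Proof. by split. Qed.

Lemma ASeq : AS P1 = AS Q1.
Proof.
apply: functional_extensionality => M; apply: propositional_extensionality.
rewrite /AS /least_model_of_reduct /reduct_closed /satisfies_constraints /=.
split.
- move=> [HA [_ [[HI HR] HL]]]; split; first exact: HA.
  split; last first.
    split; [split; first exact: HI|].
    + move=> h p n [[<- <- <-]|[|[]]] //; by apply: HR; left.
    + move=> S [HS1 HS2]; apply: HL; split => //.
      move=> h p n [[<- <- <-]|[]]; apply: HS2; by left.
  move=> p n [//|[[<- _]|[]]] [Hp _].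
  have := HL (fun x => x = 0) _ 1 (Hp 1 _). rewrite !inE => H.
  suff: 1 = 0 by []. apply: H => //. split => //.
  by move=> h p' n' [[<- _ _]|[]].
- move=> [HA [_ [[HI HR] HL]]]; split; first exact: HA.
  split; first by move=> p n [].
  split; [split; first exact: HI|].
  + move=> h p n [[<- <- <-]|[]]; apply: HR; by left.
  + move=> S [HS1 HS2]; apply: HL; split => //.
    move=> h p n [[<- <- <-]|[|[]]] //; apply: HS2; by left.
Qed.

Definition M01 : interp := fun x => (x == 0) || (x == 1).

Lemma inP : AS (relaxed_comp P1 P2) M01.
Proof.
rewrite /AS /least_model_of_reduct /reduct_closed /satisfies_constraints /=.
split.
  move=> x; rewrite /M01 /At /= !inE; by case/orP=>->; rewrite ?orbT.
split; first by move=> p n [|[]].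
split; first split.
- by [].
- move=> h p n [[<- _ _]|[[<- _ _]|[]]] _ _; done.
- move=> S [_ HS] x; rewrite /M01; case/orP=>/eqP->; apply: (HS _ [::] [::]) => //;
  by [left | right; left].
Qed.

Lemma notinQ : ~ AS (relaxed_comp Q1 P2) M01.
Proof.
move=> [_ [HC _]]. apply: (HC [:: 0; 1] [::]); first by right; left.
split => //. by move=> b; rewrite !inE /M01 => /orP[]/eqP->.
Qed.

Theorem mainTheorem2 :
  ~ exists join' : interp_set -> interp_set -> interp_set,
      forall P1 P2 : module,
        module_wf P1 -> module_wf P2 -> relaxed_composable P1 P2 ->
        AS (relaxed_comp P1 P2) = join' (AS P1) (AS P2).
Proof.
move=> [j H].
have E1 := H P1 P2 wfP1 wfP2 compP.
have E2 := H Q1 P2 wfQ1 wfP2 compQ.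
apply: notinQ. rewrite E2 -ASeq -E1. exact: inP.
Qed.
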